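(* In the pure Call-by-Name $\lambda$-calculus, let $\rightsquigarrow_U$ be the unbiased iteration of head reduction (as in the context). If $M\to_\beta M'$ and not $M\rightsquigarrow_UM'$, then $\omega(M)=\omega(M')$.
   Context: Pure $\lambda$-terms $M::=x\mid\lambda x.M\mid MM$; $\to_\beta$ is the closure of $(\lambda x.M)N\mapsto M\{N/x\}$ under all contexts. Head reduction $\to_h$ is the closure of $\beta$ under head contexts $H::=[\,]\mid\lambda x.H\mid HM$. $\rightsquigarrow_U$: if $M\to_hM'$ then $M\rightsquigarrow_UM'$; if $M$ is $\to_h$-normal: $\lambda x.P\rightsquigarrow_U\lambda x.P'$ if $P\rightsquigarrow_UP'$; $PQ\rightsquigarrow_UP'Q$ if $P\rightsquigarrow_UP'$; $PQ\rightsquigarrow_UPQ'$ if $Q\rightsquigarrow_UQ'$. A head normal form is a term $\lambda x_1\dots x_n.xM_1\dots M_p$ ($n,p\ge0$). Partial $\lambda$-terms: $P::=\Omega\mid x\mid PP\mid\lambda x.P$. The partial normal form $\omega(M)$ is $\Omega$ if $M$ is not a head normal form, and $\lambda\vec x.x\,\omega(M_1)\dots\omega(M_p)$ if $M=\lambda\vec x.xM_1\dots M_p$. *)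

(* Defs.v *)
(* Pure lambda-terms in de Bruijn notation (terms up to alpha). *)
From Stdlib Require Import Arith.

Inductive term : Type :=
| Var : nat -> term
| Lam : term -> term
| App : term -> term -> term.

Fixpoint lift (c : nat) (t : term) : term :=
  match t with
  | Var n => if n <? c then Var n else Var (S n)
  | Lam t' => Lam (lift (S c) t')
  | App a b => App (lift c a) (lift c b)
  end.

Fixpoint subst (k : nat) (u : term) (t : term) : term :=
  match t with
  | Var n => if n =? k then u else if k <? n then Var (pred n) else Var n
  | Lam t' => Lam (subst (S k) (lift 0 u) t')
  | App a b => App (subst k u a) (subst k u b)
  end.

Inductive beta : term -> term -> Prop :=
| beta_root : forall M N, beta (App (Lam M) N) (subst 0 N M)
| beta_lam : forall M M', beta M M' -> beta (Lam M) (Lam M')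
| beta_appl : forall M M' N, beta M M' -> beta (App M N) (App M' N)
| beta_appr : forall M N N', beta N N' -> beta (App M N) (App M N').

Inductive hred : term -> term -> Prop :=
| hred_root : forall M N, hred (App (Lam M) N) (subst 0 N M)
| hred_lam : forall M M', hred M M' -> hred (Lam M) (Lam M')
| hred_app : forall M M' N, hred M M' -> hred (App M N) (App M' N).

Definition hnormal (M : term) : Prop := forall M', ~ hred M M'.

Inductive ured : term -> term -> Prop :=
| ured_head : forall M M', hred M M' -> ured M M'
| ured_lam : forall P P', hnormal (Lam P) -> ured P P' -> ured (Lam P) (Lam P')
| ured_appl : forall P P' Q, hnormal (App P Q) -> ured P P' -> ured (App P Q) (App P' Q)
| ured_appr : forall P Q Q', hnormal (App P Q) -> ured Q Q' -> ured (App P Q) (App P Q').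

Inductive pterm : Type :=
| POmega : pterm
| PVar : nat -> pterm
| PApp : pterm -> pterm -> pterm
| PLam : pterm -> pterm.

Fixpoint is_neutral (t : term) : bool :=
  match t with
  | Var _ => true
  | App a _ => is_neutral a
  | Lam _ => false
  end.

Fixpoint is_hnf (t : term) : bool :=
  match t with
  | Lam t' => is_hnf t'
  | _ => is_neutral t
  end.

Fixpoint omega (t : term) : pterm :=
  match t with
  | Var n => PVar n
  | Lam t' => if is_hnf t' then PLam (omega t') else POmega
  | App a b => if is_neutral a then PApp (omega a) (omega b) else POmega
  end.

(* Main.v *)
Require Import Defs.

Lemma neutral_back : forall P P', beta P P' -> is_neutral P' = true ->
  is_neutral P = true \/ hred P P'.
Proof.
  induction 1; simpl; intros Hx.
  - right; constructor.
  - discriminate.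
  - destruct (IHbeta Hx) as [H1|H1]; auto. right; now constructor.
  - auto.
Qed.

Lemma hnf_back : forall P P', beta P P' -> is_hnf P' = true ->
  is_hnf P = true \/ hred P P'.
Proof.
  induction 1; intros Hx.
  - right; constructor.
  - simpl in *. destruct (IHbeta Hx); auto. right; now constructor.
  - simpl in *. destruct (neutral_back (App M N) (App M' N) (beta_appl _ _ _ H) Hx); auto.
  - simpl in *. auto.
Qed.

Lemma neutral_hnormal : forall t, is_neutral t = true -> hnormal t.
Proof.
  induction t; simpl; intros H M' Hr; try discriminate.
  - inversion Hr.
  - inversion Hr; subst. simpl in H; discriminate. eapply IHt1; eauto.
Qed.

Lemma hnf_hnormal : forall t, is_hnf t = true -> hnormal t.
Proof.
  induction t; simpl; intros H M' Hr.
  - inversion Hr.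
  - inversion Hr; subst. eapply IHt; eauto.
  - exact (neutral_hnormal (App t1 t2) H M' Hr).
Qed.

Lemma hnormal_app : forall P Q, hnormal (App P Q) -> is_neutral P = true.
Proof.
  induction P; simpl; intros Q H; auto.
  - exfalso; eapply H; constructor.
  - apply (IHP1 P2). intros M' Hr. eapply H. constructor. exact Hr.
Qed.

Lemma omega_hnf_false : forall t, is_hnf t = false -> omega t = POmega.
Proof.
  destruct t; simpl; intros H; try discriminate.
  - now rewrite H.
  - now rewrite H.
Qed.

Lemma omega_hnf_true : forall t, is_hnf t = true -> omega t <> POmega.
Proof.
  destruct t; simpl; intros H; try discriminate.
  - now rewrite H.
  - now rewrite H.
Qed.

Lemma omega_neutral_true : forall t, is_neutral t = true ->
  (exists n, omega t = PVar n) \/ (exists a b, omega t = PApp a b).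
Proof.
  destruct t; simpl; intros H; try discriminate.
  - eauto.
  - rewrite H; eauto.
Qed.

Lemma omega_neutral_false : forall t, is_neutral t = false ->
  omega t = POmega \/ exists a, omega t = PLam a.
Proof.
  destruct t; simpl; intros H; try discriminate.
  - destruct (is_hnf t); eauto.
  - rewrite H; eauto.
Qed.

Theorem mainTheorem16 : forall M M' : term,
  beta M M' -> ~ ured M M' -> omega M = omega M'.
Proof.
  induction 1; intros Hn.
  - exfalso; apply Hn; constructor; constructor.
  - simpl.
    destruct (is_hnf M) eqn:E.
    + assert (HP : hnormal (Lam M)).
      { intros X Hr. inversion Hr; subst. eapply hnf_hnormal; eauto. }
      assert (IH : omega M = omega M').
      { apply IHbeta. intro U. apply Hn. now apply ured_lam. }
      destruct (is_hnf M') eqn:E'.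
      * now rewrite IH.
      * exfalso. apply (omega_hnf_true M E). rewrite IH. now apply omega_hnf_false.
    + destruct (is_hnf M') eqn:E'; auto.
      destruct (hnf_back M M' H E') as [C|C]. congruence.
      exfalso; apply Hn; constructor; now constructor.
  - simpl. destruct (is_neutral M) eqn:E.
    + assert (HP : hnormal (App M N)) by (apply neutral_hnormal; simpl; auto).
      assert (IH : omega M = omega M').
      { apply IHbeta. intro U. apply Hn. now apply ured_appl. }
      destruct (is_neutral M') eqn:E'.
      * now rewrite IH.
      * exfalso. destruct (omega_neutral_true M E) as [[n Hm]|[a [b Hm]]];
        destruct (omega_neutral_false M' E') as [Hm'|[c Hm']]; congruence.
    + destruct (is_neutral M') eqn:E'; auto.
      destruct (neutral_back M M' H E') as [C|C]. congruence.
      exfalso; apply Hn; constructor; now constructor.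
  - simpl. destruct (is_neutral M) eqn:E; auto.
    assert (HP : hnormal (App M N)) by (apply neutral_hnormal; simpl; auto).
    rewrite IHbeta; auto. intro U. apply Hn. now apply ured_appr.
Qed.
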